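(* The space $\widetilde{l_1}$ has the Schur property, i.e., every weakly null sequence in $\widetilde{l_1}$ converges to $0$ in norm.
   Context: For a real sequence $a=(a_n)_{n\ge1}$ let $\widetilde{a_n}=\sup_{k\ge n}|a_k|$. The Tandori sequence space $\widetilde{l_1}$ is the space of sequences $a$ with $\|a\|_{\widetilde{l_1}}=\sum_{n=1}^\infty\widetilde{a_n}<\infty$. *)

(* Defs.v *)
From HB Require Import structures.
From mathcomp Require Import all_boot all_order all_algebra.
From mathcomp Require Import all_classical all_reals all_analysis.
Set Implicit Arguments. Unset Strict Implicit. Unset Printing Implicit Defensive.
Import Order.TTheory GRing.Theory Num.Theory.
Local Open Scope classical_set_scope.
Local Open Scope ring_scope.
Local Open Scope ereal_scope.

Definition tilde (R : realType) (a : nat -> R) (n : nat) : \bar R :=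
  ereal_sup [set (`|a k|)%:E | k in [set k : nat | (n <= k)%N]].

(* ||a|| = sum_{n>=1} tilde a n  (indices shifted to start at 0) *)
Definition tnorm (R : realType) (a : nat -> R) : \bar R :=
  \sum_(0 <= n <oo) tilde a n.

Definition in_tl1 (R : realType) (a : nat -> R) : Prop := tnorm a < +oo.

(* continuous linear functionals on the Tandori space (elements of its dual):
   only their values on the space matter *)
Definition tl1_dual (R : realType) (f : (nat -> R) -> R) : Prop :=
  (forall a b, in_tl1 a -> in_tl1 b -> f (fun k => (a k + b k)%R) = (f a + f b)%R) /\
  (forall (c : R) a, in_tl1 a -> f (fun k => (c * a k)%R) = (c * f a)%R) /\
  (exists C : R, forall a, in_tl1 a -> (`|f a|)%:E <= C%:E * tnorm a).

Definition weakly_null (R : realType) (x : nat -> nat -> R) : Prop :=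
  (forall j, in_tl1 (x j)) /\
  (forall f, tl1_dual f -> (fun j => f (x j)) @ \oo --> 0%R).

(* Main.v *)
Require Import Defs.
From HB Require Import structures.
From mathcomp Require Import all_boot all_order all_algebra.
From mathcomp Require Import all_classical all_reals all_analysis.
Set Implicit Arguments. Unset Strict Implicit. Unset Printing Implicit Defensive.
Import Order.TTheory GRing.Theory Num.Theory.
Local Open Scope classical_set_scope.
Local Open Scope ring_scope.
Local Open Scope ereal_scope.

Local Open Scope classical_set_scope.
Local Open Scope ring_scope.
Local Open Scope ereal_scope.

Lemma tilde_ge (R : realType) (a : nat -> R) n k : (n <= k)%N -> (`|a k|)%:E <= tilde a n.
Proof. by move=> nk; apply: ereal_sup_ubound; exists k. Qed.

Lemma tilde_ge0 (R : realType) (a : nat -> R) n : 0 <= tilde a n.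
Proof. by apply: (le_trans _ (tilde_ge a (leqnn n))); rewrite lee_fin. Qed.

Lemma tilde_le (R : realType) (a : nat -> R) n (B : R) :
  (forall k, (n <= k)%N -> `|a k| <= B)%R -> tilde a n <= B%:E.
Proof. by move=> H; apply: ub_ereal_sup => _ [k /= nk <-]; rewrite lee_fin H. Qed.

Lemma psum_le_tnorm (R : realType) (a : nat -> R) N :
  \sum_(0 <= n < N) tilde a n <= tnorm a.
Proof. by apply: nneseries_lim_ge => n _ _; exact: tilde_ge0. Qed.

Lemma tilde_le_tnorm (R : realType) (a : nat -> R) n : tilde a n <= tnorm a.
Proof.
apply: le_trans (psum_le_tnorm a n.+1).
rewrite big_nat_recr //= leeDr //; apply: sume_ge0 => i _; exact: tilde_ge0.
Qed.

Definition atl (R : realType) (a : nat -> R) n : R := fine (tilde a n).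
Definition Sn (R : realType) (a : nat -> R) : R := fine (tnorm a).
Definition Pn (R : realType) (a : nat -> R) N : R := (\sum_(0 <= n < N) atl a n)%R.

Lemma tilde_fin (R : realType) (a : nat -> R) n : in_tl1 a -> tilde a n \is a fin_num.
Proof.
move=> h; rewrite ge0_fin_numE; last exact: tilde_ge0.
exact: le_lt_trans (tilde_le_tnorm a n) h.
Qed.

Lemma tnorm_fin (R : realType) (a : nat -> R) : in_tl1 a -> tnorm a \is a fin_num.
Proof.
move=> h; rewrite ge0_fin_numE //; apply: le_trans (tilde_le_tnorm a 0).
exact: tilde_ge0.
Qed.

Lemma atlE (R : realType) (a : nat -> R) n : in_tl1 a -> (atl a n)%:E = tilde a n.
Proof. by move=> h; rewrite fineK // tilde_fin. Qed.

Lemma SnE (R : realType) (a : nat -> R) : in_tl1 a -> (Sn a)%:E = tnorm a.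
Proof. by move=> h; rewrite fineK // tnorm_fin. Qed.

Lemma atl_ge (R : realType) (a : nat -> R) n k : in_tl1 a -> (n <= k)%N -> (`|a k| <= atl a n)%R.
Proof. by move=> h nk; rewrite -lee_fin atlE // tilde_ge. Qed.

Lemma atl_ge0 (R : realType) (a : nat -> R) n : in_tl1 a -> (0 <= atl a n)%R.
Proof. by move=> h; apply: le_trans (atl_ge h (leqnn n)). Qed.

Lemma atl_le (R : realType) (a : nat -> R) n (B : R) : in_tl1 a ->
  (forall k, (n <= k)%N -> `|a k| <= B)%R -> (atl a n <= B)%R.
Proof. by move=> h H; rewrite -lee_fin atlE // tilde_le. Qed.

Lemma atl_anti (R : realType) (a : nat -> R) n m : in_tl1 a -> (n <= m)%N -> (atl a m <= atl a n)%R.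
Proof.
move=> h nm; apply: atl_le => // k mk; apply: atl_ge => //; exact: leq_trans mk.
Qed.

Lemma PnE (R : realType) (a : nat -> R) N : in_tl1 a ->
  (Pn a N)%:E = \sum_(0 <= n < N) tilde a n.
Proof.
move=> h; rewrite /Pn -sumEFin; apply: eq_bigr => i _; exact: atlE.
Qed.

Lemma Pn_le (R : realType) (a : nat -> R) N : in_tl1 a -> (Pn a N <= Sn a)%R.
Proof. by move=> h; rewrite -lee_fin PnE // SnE // psum_le_tnorm. Qed.

Lemma Pn_approx (R : realType) (a : nat -> R) (e : R) : in_tl1 a -> (0 < e)%R ->
  exists m, (Sn a - Pn a m <= e)%R.
Proof.
move=> h e0.
have hom : {homo (fun N => \sum_(0 <= n < N) tilde a n) : n m / (n <= m)%N >-> n <= m}.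
  by apply: ereal_nondecreasing_series => n _ _; exact: tilde_ge0.
have E : tnorm a = ereal_sup (range (fun N => \sum_(0 <= n < N) tilde a n)).
  by apply: cvg_lim => //; exact: ereal_nondecreasing_cvgn.
have [_ [m _ <-]] := ub_ereal_sup_adherent e0 (eq_ind _ (fun z => z \is a fin_num) (tnorm_fin h) _ E).
rewrite -E -SnE // -PnE // -EFinB lte_fin => H.
by exists m; rewrite lerBlDr -lerBlDl ltW.
Qed.

Local Open Scope classical_set_scope.
Local Open Scope ring_scope.
Local Open Scope ereal_scope.
Local Open Scope ring_scope.
Definition cnt (R : realType) (pi : nat -> nat) k : R := \sum_(0 <= n < k.+1) (pi n == k)%:R.

Lemma sum_delta (R : realType) (h : nat -> R) (p a b : nat) :
  \sum_(a <= k < b) (p == k)%:R * h k = ((a <= p)%N && (p < b)%N)%:R * h p.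
Proof.
elim: b => [|b IH]; first by rewrite big_geq // ltn0 andbF mul0r.
case: (leqP a b) => ab.
  rewrite big_nat_recr //= IH.
  case: (ltngtP p b) => pb.
  - by rewrite mul0r addr0 andbT ltnS (ltnW pb) andbT.
  - by rewrite mul0r addr0 andbF [(p < b.+1)%N]ltnS [(p <= b)%N]leqNgt pb andbF.
  - by rewrite andbF mul0r mul1r add0r pb ab ltnSn mul1r.
rewrite big_geq //; case: (leqP a p) => ap /=; last by rewrite mul0r.
by rewrite ltnS leqNgt (leq_trans ab ap) mul0r.
Qed.

Lemma fiber_sum (R : realType) (pi : nat -> nat) (h : nat -> R) a b :
  (forall n, (n <= pi n)%N) ->
  \sum_(a <= k < b) cnt R pi k * h k =
  \sum_(0 <= n < b) ((a <= pi n)%N && (pi n < b)%N)%:R * h (pi n).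
Proof.
move=> Hpi.
transitivity (\sum_(a <= k < b) \sum_(0 <= n < b) (pi n == k)%:R * h k).
  apply: eq_big_nat => k /andP[ak kb]; rewrite /cnt big_distrl /=.
  rewrite (@big_cat_nat _ _ _ k.+1 0 b) /=; last by []; last by [].
  suff -> : \sum_(k.+1 <= i < b) (pi i == k)%:R * h k = 0 by rewrite addr0.
  rewrite big_nat_cond big1 // => n /andP[/andP[kn _] _].
  suff -> : (pi n == k) = false by rewrite mul0r.
  apply/negbTE/eqP => e; move: (Hpi n); rewrite e leqNgt; by rewrite kn.
rewrite exchange_big_nat /=; apply: eq_bigr => n _; exact: sum_delta.
Qed.

Lemma cnt_ge0 (R : realType) pi k : 0 <= cnt R pi k.
Proof. by apply: sumr_ge0 => i _; rewrite ler0n. Qed.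


Lemma fiber_le (R : realType) (pi : nat -> nat) (h : nat -> R) a b :
  (forall n, (n <= pi n)%N) -> (forall k, 0 <= h k) ->
  (forall n, (n < a)%N -> (pi n < a)%N) ->
  \sum_(a <= k < b) cnt R pi k * h k <= \sum_(a <= n < b) h (pi n).
Proof.
move=> Hpi h0 Ha; rewrite fiber_sum; last exact: Hpi.
case: (leqP a b) => ab; last first.
  rewrite [X in _ <= X]big_geq; last exact: ltnW.
  rewrite big_nat_cond big1 => [//|n /andP[/andP[_ nb] _]].
  by rewrite leqNgt Ha ?mul0r // (ltn_trans nb ab).
rewrite (@big_cat_nat _ _ _ a 0 b) /=; [|by []|exact: ab].
rewrite [X in X + _]big_nat_cond big1 => [|n /andP[/andP[_ na] _]]; last first.
  by rewrite leqNgt Ha ?mul0r.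
rewrite add0r; apply: ler_sum => n _; case: (_ && _); by rewrite ?mul1r ?mul0r.
Qed.

Lemma fiber_eq (R : realType) (pi : nat -> nat) (h : nat -> R) a b :
  (forall n, (n <= pi n)%N) ->
  (forall n, (n < a)%N -> (pi n < a)%N) ->
  (forall n, (a <= n)%N -> (n < b)%N -> (pi n < b)%N) ->
  \sum_(a <= k < b) cnt R pi k * h k = \sum_(a <= n < b) h (pi n).
Proof.
move=> Hpi Ha Hb; rewrite fiber_sum; last exact: Hpi.
case: (leqP a b) => ab; last first.
  rewrite [X in _ = X]big_geq; last exact: ltnW.
  rewrite big_nat_cond big1 => [//|n /andP[/andP[_ nb] _]].
  by rewrite leqNgt Ha ?mul0r // (ltn_trans nb ab).
rewrite (@big_cat_nat _ _ _ a 0 b) /=; [|by []|exact: ab].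
rewrite [X in X + _]big_nat_cond big1 => [|n /andP[/andP[_ na] _]]; last first.
  by rewrite leqNgt Ha ?mul0r.
rewrite add0r big_nat_cond [X in _ = X]big_nat_cond.
apply: eq_bigr => n /andP[/andP[an nb] _].
by rewrite (leq_trans an (Hpi n)) Hb // mul1r.
Qed.

Local Open Scope classical_set_scope.
Local Open Scope ring_scope.
Local Open Scope ereal_scope.
Import numFieldNormedType.Exports.
Local Open Scope ring_scope.

Definition gfun (R : realType) (pi : nat -> nat) (sg : nat -> R) k : R := sg k * cnt R pi k.
Definition Ffun (R : realType) (pi : nat -> nat) (sg : nat -> R) (a : nat -> R) : R :=
  limn (series (fun k => gfun pi sg k * a k)).

Lemma abs_psum_le (R : realType) pi (sg : nat -> R) (a : nat -> R) N :
  (forall n, (n <= pi n)%N) -> (forall k, `|sg k| <= 1) -> in_tl1 a ->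
  \sum_(0 <= k < N) `|gfun pi sg k * a k| <= Sn a.
Proof.
move=> Hpi Hsg ha; apply: le_trans (Pn_le N ha).
apply: (@le_trans _ _ (\sum_(0 <= k < N) cnt R pi k * `|a k|)).
  apply: ler_sum => k _; rewrite /gfun normrM normrM (ger0_norm (cnt_ge0 _ _ _)).
  rewrite -mulrA; apply: ler_piMl => //; by apply: mulr_ge0 => //; exact: cnt_ge0.
have H := @fiber_le R pi (fun k => `|a k|) 0 N Hpi (fun k => normr_ge0 (a k)) (fun n (h : (n < 0)%N) => h).
apply: (le_trans H).
rewrite /Pn; apply: ler_sum => n _; exact: atl_ge.
Qed.

Lemma F_cvg (R : realType) pi (sg : nat -> R) (a : nat -> R) :
  (forall n, (n <= pi n)%N) -> (forall k, `|sg k| <= 1) -> in_tl1 a ->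
  cvgn (series (fun k => gfun pi sg k * a k)).
Proof.
move=> Hpi Hsg ha; apply: normed_cvg.
apply: nondecreasing_is_cvgn.
  by apply: nondecreasing_series => n _ _; exact: normr_ge0.
exists (Sn a) => _ [N _ <-]; exact: abs_psum_le.
Qed.

Lemma F_add (R : realType) pi (sg : nat -> R) (a b : nat -> R) :
  (forall n, (n <= pi n)%N) -> (forall k, `|sg k| <= 1) -> in_tl1 a -> in_tl1 b ->
  Ffun pi sg (fun k => a k + b k) = Ffun pi sg a + Ffun pi sg b.
Proof.
move=> Hpi Hsg ha hb; rewrite /Ffun -limD; [|exact: F_cvg|exact: F_cvg].
have -> : series (fun k => gfun pi sg k * (a k + b k)) =
   (series (fun k => gfun pi sg k * a k) + series (fun k => gfun pi sg k * b k))%R.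
  apply: funext => n /=; rewrite /series /= [in RHS]/GRing.add /= -big_split /=.
  by apply: eq_bigr => k _; rewrite mulrDr.
by [].
Qed.

Lemma F_scale (R : realType) pi (sg : nat -> R) (c : R) (a : nat -> R) :
  (forall n, (n <= pi n)%N) -> (forall k, `|sg k| <= 1) -> in_tl1 a ->
  Ffun pi sg (fun k => c * a k) = c * Ffun pi sg a.
Proof.
move=> Hpi Hsg ha; rewrite /Ffun -[RHS]limZl_tmp; last exact: F_cvg.
have -> : series (fun k => gfun pi sg k * (c * a k)) =
   (c *: series (fun k => gfun pi sg k * a k))%R.
  apply: funext => n /=; rewrite /series /= -[RHS]/(c * \sum_(0 <= k < n) gfun pi sg k * a k) mulr_sumr.
  by apply: eq_bigr => k _; rewrite mulrCA.
by [].
Qed.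

Lemma F_bound (R : realType) pi (sg : nat -> R) (a : nat -> R) :
  (forall n, (n <= pi n)%N) -> (forall k, `|sg k| <= 1) -> in_tl1 a ->
  `|Ffun pi sg a| <= Sn a.
Proof.
move=> Hpi Hsg ha.
have H N : `|series (fun k => gfun pi sg k * a k) N| <= Sn a.
  rewrite /series /=; apply: le_trans (ler_norm_sum _ _ _) _; exact: abs_psum_le.
rewrite ler_norml; apply/andP; split.
  apply: limr_ge; first exact: F_cvg.
  by apply: nearW => N; have := H N; rewrite ler_norml => /andP[].
apply: limr_le; first exact: F_cvg.
by apply: nearW => N; have := H N; rewrite ler_norml => /andP[].
Qed.

Lemma F_dual (R : realType) pi (sg : nat -> R) :
  (forall n, (n <= pi n)%N) -> (forall k, `|sg k| <= 1) -> tl1_dual (Ffun pi sg).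
Proof.
move=> Hpi Hsg; split; [|split].
- by move=> a b ha hb; exact: F_add.
- by move=> c a ha; exact: F_scale.
- exists 1%R => a ha; rewrite mul1e -SnE // lee_fin; exact: F_bound.
Qed.

Local Open Scope classical_set_scope.
Local Open Scope ring_scope.
Local Open Scope ereal_scope.
Import numFieldNormedType.Exports.
From mathcomp Require Import lra zify.
Local Open Scope ring_scope.

Lemma Pn_split (R : realType) (a : nat -> R) m N : (m <= N)%N ->
  Pn a N = Pn a m + \sum_(m <= n < N) atl a n.
Proof. by move=> mN; rewrite /Pn (@big_cat_nat _ _ _ m 0 N). Qed.

Lemma Pn_mono (R : realType) (a : nat -> R) m N : in_tl1 a -> (m <= N)%N -> Pn a m <= Pn a N.
Proof.
move=> ha mN; rewrite (Pn_split a mN) lerDl; apply: sumr_ge0 => n _; exact: atl_ge0.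
Qed.

Lemma sum_le_const (R : realType) (h : nat -> R) (c : R) a b :
  (forall n, (a <= n)%N -> (n < b)%N -> h n <= c) ->
  \sum_(a <= n < b) h n <= c *+ (b - a).
Proof.
move=> H; rewrite -sumr_const_nat big_nat_cond [X in _ <= X]big_nat_cond.
by apply: ler_sum => n /andP[/andP[an nb] _]; exact: H.
Qed.

Lemma sum_ge_const (R : realType) (h : nat -> R) (c : R) a b :
  (forall n, (a <= n)%N -> (n < b)%N -> c <= h n) ->
  c *+ (b - a) <= \sum_(a <= n < b) h n.
Proof.
move=> H; rewrite -sumr_const_nat big_nat_cond [X in _ <= X]big_nat_cond.
by apply: ler_sum => n /andP[/andP[an nb] _]; exact: H.
Qed.

Lemma keyB (R : realType) (y : nat -> R) pi (t q m : nat) (d e : R) :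
  in_tl1 y -> (forall n, (n <= pi n)%N) ->
  (forall n, (t <= n)%N -> (n < q)%N -> (pi n < q)%N) ->
  (forall n k, (t <= n)%N -> (n <= k)%N -> (k < q)%N -> `|y k| <= `|y (pi n)|) ->
  (forall k, (k < 2 * t)%N -> `|y k| <= d) ->
  q = (2 * m)%N -> (2 * t < m)%N -> Sn y - Pn y m <= e -> 0 <= d ->
  Sn y <= 2 * (\sum_(t <= n < q) `|y (pi n)|) + t%:R * d + 3 * e.
Proof.
move=> hy Hpi Hin Hmax Hsm qE tm He d0.
set Q := \sum_(t <= n < q) `|y (pi n)|.
have mq : (m <= q)%N by lia.
have tq : (t <= q)%N by lia.
have tq2 : (2 * t < q)%N by lia.
have S1 : Sn y <= Pn y q + e.
  have := Pn_mono hy mq; lra.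
have Pq := Pn_split y tq.
set A := `|y (pi (2 * t)%N)|.
set aq := atl y q.
have aq0 : 0 <= aq by exact: atl_ge0.
have B1 : \sum_(t <= n < q) atl y n <= Q + aq *+ (q - t).
  rewrite -sumr_const_nat /Q -big_split /= big_nat_cond [X in _ <= X]big_nat_cond.
  apply: ler_sum => n /andP[/andP[tn nq] _]; apply: atl_le => // k nk.
  case: (ltnP k q) => kq.
    have := Hmax n k tn nk kq; lra.
  have := atl_ge hy kq; rewrite -/aq; have := normr_ge0 (y (pi n)); lra.
have B2 : Pn y t <= (d + A + aq) *+ t.
  rewrite /Pn -[X in _ *+ X]subn0; apply: sum_le_const => n _ nt.
  apply: atl_le => // k nk.
  have A0 : 0 <= A by exact: normr_ge0.
  case: (ltnP k (2 * t)) => k2t.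
    have := Hsm k k2t; lra.
  case: (ltnP k q) => kq.
    have := Hmax (2 * t)%N k ltac:(lia) k2t kq; rewrite -/A; lra.
  have := atl_ge hy kq; rewrite -/aq; lra.
have B3 : A *+ t <= Q.
  have E : (2 * t - t)%N = t by lia.
  apply: (@le_trans _ _ (\sum_(t <= n < 2 * t) `|y (pi n)|)).
    rewrite -[X in _ *+ X]E; apply: sum_ge_const => n tn nt.
    apply: (Hmax n (pi (2 * t)%N) tn).
      exact: leq_trans (ltnW nt) (Hpi _).
    apply: Hin; lia.
  rewrite /Q (@big_cat_nat _ _ _ (2 * t) t q) /=; [|lia|lia].
  rewrite lerDl; apply: sumr_ge0 => n _; exact: normr_ge0.
have B4 : aq *+ q <= 2 * e.
  have H1 : aq *+ (q - m) <= \sum_(m <= n < q) atl y n.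
    apply: sum_ge_const => n mn nq; apply: atl_anti => //; exact: ltnW.
  have H2 := Pn_split y mq.
  have H3 := Pn_le q hy.
  have -> : q = ((q - m) + (q - m))%N by lia.
  rewrite mulrnDr; lra.
have B5 : aq *+ t + aq *+ (q - t) = aq *+ q by rewrite -mulrnDr subnKC.
rewrite !mulrnDl in B2.
rewrite mulr_natl; lra.
Qed.

Lemma abs_gy (R : realType) pi (sg : nat -> R) (y : nat -> R) k :
  (forall k, `|sg k| <= 1) -> `|gfun pi sg k * y k| <= cnt R pi k * `|y k|.
Proof.
move=> Hsg; rewrite /gfun normrM normrM (ger0_norm (cnt_ge0 _ _ _)).
rewrite -mulrA; apply: ler_piMl => //; by apply: mulr_ge0 => //; exact: cnt_ge0.
Qed.

Lemma range_bound (R : realType) pi (sg : nat -> R) (y : nat -> R) a b (B : R) :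
  (forall n, (n <= pi n)%N) -> (forall k, `|sg k| <= 1) ->
  (forall n, (n < a)%N -> (pi n < a)%N) ->
  \sum_(a <= n < b) `|y (pi n)| <= B ->
  - B <= \sum_(a <= k < b) gfun pi sg k * y k.
Proof.
move=> Hpi Hsg Ha HB.
have : `|\sum_(a <= k < b) gfun pi sg k * y k| <= B.
  apply: le_trans (ler_norm_sum _ _ _) _.
  apply: (@le_trans _ _ (\sum_(a <= k < b) cnt R pi k * `|y k|)).
    by apply: ler_sum => k _; exact: abs_gy.
  apply: le_trans HB.
  exact: (@fiber_le R pi (fun k => `|y k|) a b Hpi (fun k => normr_ge0 (y k)) Ha).
by rewrite ler_norml => /andP[].
Qed.

Lemma keyA (R : realType) (y : nat -> R) pi (sg : nat -> R) (t q m : nat) (d e : R) :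
  in_tl1 y -> (forall n, (n <= pi n)%N) -> (forall k, `|sg k| <= 1) ->
  (forall n, (n < t)%N -> (pi n < t)%N) ->
  (forall n, (t <= n)%N -> (n < q)%N -> (pi n < q)%N) ->
  (forall k, (t <= k)%N -> (k < q)%N -> sg k * y k = `|y k|) ->
  (forall k, (k < 2 * t)%N -> `|y k| <= d) ->
  (t <= q)%N -> (m <= q)%N -> Sn y - Pn y m <= e ->
  \sum_(t <= n < q) `|y (pi n)| - t%:R * d - e <= Ffun pi sg y.
Proof.
move=> hy Hpi Hsg Hlow Hin Hsgn Hsm tq mq He.
apply: limr_ge; first exact: F_cvg.
exists q => // N /= qN.
rewrite /series /= (@big_cat_nat _ _ _ t 0 N) //=; last exact: leq_trans tq qN.
rewrite (@big_cat_nat _ _ _ q t N) //=.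
have M : \sum_(t <= k < q) gfun pi sg k * y k = \sum_(t <= n < q) `|y (pi n)|.
  rewrite -(@fiber_eq R pi (fun k => `|y k|) t q Hpi Hlow Hin).
  apply: eq_big_nat => k /andP[tk kq].
  by rewrite /gfun mulrAC -(Hsgn k tk kq) mulrC mulrA [cnt _ _ _ * _]mulrC.
rewrite M.
have L : - (t%:R * d) <= \sum_(0 <= k < t) gfun pi sg k * y k.
  apply: range_bound => //.
  rewrite mulr_natl -[X in _ *+ X]subn0; apply: sum_le_const => n _ nt.
  apply: Hsm; have := Hlow n nt; lia.
have U : - e <= \sum_(q <= k < N) gfun pi sg k * y k.
  apply: range_bound => //.
    move=> n nq; case: (ltnP n t) => nt.
      have := Hlow n nt; lia.
    exact: Hin.
  apply: (@le_trans _ _ (\sum_(q <= n < N) atl y n)).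
    apply: ler_sum => n _; exact: atl_ge.
  have := Pn_split y qN; have := Pn_le N hy; have := Pn_mono hy mq; lra.
lra.
Qed.

Local Open Scope classical_set_scope.
Local Open Scope ring_scope.
Local Open Scope ereal_scope.
Import numFieldNormedType.Exports.
From mathcomp Require Import ring lra zify.
Local Open Scope ring_scope.

Lemma argmax_ex (R : realType) (h : nat -> R) n q : (n < q)%N ->
  exists k, [/\ (n <= k)%N, (k < q)%N & forall k', (n <= k')%N -> (k' < q)%N -> h k' <= h k].
Proof.
elim: q => [//|q IH] nq.
case: (ltnP n q) => nq'.
  have [k [nk kq Hk]] := IH nq'.
  case: (leP (h q) (h k)) => hqk.
    exists k; split; [by [] | lia | ].
    move=> k' nk' k'q; case: (ltnP k' q) => k'q'; first exact: Hk.
    by have -> : k' = q by lia.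
  exists q; split; [lia | by [] | ].
  move=> k' nk' k'q; case: (ltnP k' q) => k'q'.
    exact: le_trans (Hk k' nk' k'q') (ltW hqk).
  by have -> : k' = q by lia.
exists q; split; [lia | by [] | ].
move=> k' nk' k'q; by have -> : k' = q by lia.
Qed.

Fixpoint stseq (f : nat * nat -> nat * nat) (i : nat) : nat * nat :=
  match i with
  | 0 => (0, 0)%N
  | i'.+1 => ((f (stseq f i')).2, (f (stseq f i')).1.+1)
  end.

Lemma coord_dual (R : realType) (k : nat) : tl1_dual (fun a : nat -> R => a k).
Proof.
split; [by []|split; [by []|]].
exists 1%R => a ha; rewrite mul1e; apply: le_trans (tilde_le_tnorm a 0).
exact: tilde_ge.
Qed.

Lemma ev_ex (P : nat -> Prop) : (\forall n \near \oo, P n) -> exists M, forall n, (M <= n)%N -> P n.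
Proof. by move=> [M _ HM]; exists M => n Mn; apply: HM. Qed.

Lemma coord_small (R : realType) (x : nat -> nat -> R) :
  (forall f, tl1_dual f -> (fun j => f (x j)) @ \oo --> 0) ->
  forall u (d : R), 0 < d -> exists M, forall j, (M <= j)%N -> forall k, (k < u)%N -> `|x j k| <= d.
Proof.
move=> Hw u d d0; elim: u => [|u [M1 H1]].
  by exists 0%N => j _ k.
have := Hw _ (coord_dual R u) => /cvgr0_norm_le /(_ d d0) /ev_ex [M2 H2].
exists (maxn M1 M2) => j Mj k ku.
case: (ltnP k u) => ku'.
  apply: H1 ku'; exact: leq_trans (leq_maxl _ _) Mj.
have -> : k = u by lia.
apply: H2; exact: leq_trans (leq_maxr _ _) Mj.
Qed.

Definition spec (R : realType) (x : nat -> nat -> R) (eps : R) (p r : nat * nat) : Prop :=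
  [/\ (p.2 <= r.1)%N, eps <= Sn (x r.1),
      (forall k, (k < 2 * p.1)%N -> `|x r.1 k| <= eps / (8 * (p.1.+1)%:R)) &
      exists m, [/\ r.2 = (2 * m)%N, (2 * p.1 < m)%N & Sn (x r.1) - Pn (x r.1) m <= eps / 16]].

Lemma step_ex (R : realType) (x : nat -> nat -> R) (eps : R) :
  (forall j, in_tl1 (x j)) ->
  (forall f, tl1_dual f -> (fun j => f (x j)) @ \oo --> 0) -> 0 < eps ->
  (forall M, exists j, (M <= j)%N /\ eps <= Sn (x j)) ->
  forall p, exists r, spec x eps p r.
Proof.
move=> hx Hw e0 Hinf [t jl].
have d0 : 0 < eps / (8 * (t.+1)%:R).
  by apply: divr_gt0 => //; apply: mulr_gt0 => //; rewrite ltr0n.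
have [M HM] := coord_small Hw (2 * t) d0.
have [j [Mj Hj]] := Hinf (maxn M jl).
have e16 : 0 < eps / 16 by apply: divr_gt0.
have [m0 Hm0] := Pn_approx (hx j) e16.
exists (j, (2 * maxn m0 (2 * t).+1)%N); split => //=.
- exact: leq_trans (leq_maxr _ _) Mj.
- apply: HM; exact: leq_trans (leq_maxl _ _) Mj.
- exists (maxn m0 (2 * t).+1); split => //; first exact: leq_maxr.
  have := Pn_mono (hx j) (leq_maxl m0 (2 * t).+1); lra.
Qed.

Lemma main_contra (R : realType) (x : nat -> nat -> R) (eps : R) :
  (forall j, in_tl1 (x j)) ->
  (forall f, tl1_dual f -> (fun j => f (x j)) @ \oo --> 0) -> 0 < eps ->
  (forall M, exists j, (M <= j)%N /\ eps <= Sn (x j)) -> False.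
Proof.
move=> hx Hw e0 Hinf.
case: (boolp.choice (step_ex hx Hw e0 Hinf)) => stp Hstp.
pose st := stseq stp.
pose tt i := (st i).1.
pose jj i := (stp (st i)).1.
have ttS i : tt i.+1 = (stp (st i)).2 by [].
have jjS i : (st i.+1).2 = (jj i).+1 by [].
have jjge i : (i <= (st i).2)%N /\ ((st i).2 <= jj i)%N.
  elim: i => [|i [IH1 IH2]].
    by split => //; case: (Hstp (st 0)).
  rewrite jjS; split; first lia.
  by case: (Hstp (st i.+1)).
have tt_step i : (2 * tt i < tt i.+1)%N.
  rewrite ttS; case: (Hstp (st i)) => _ _ _ [m [-> tm _]]; rewrite /tt; lia.
have tt_mono i i' : (i <= i')%N -> (tt i <= tt i')%N.
  elim: i' => [|i' IH]; first by rewrite leqn0 => /eqP ->.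
  rewrite leq_eqVlt => /orP[/eqP -> //|]; rewrite ltnS => /IH.
  have := tt_step i'; lia.
have tt_ge i : (i <= tt i)%N.
  elim: i => [//|i IH]; have := tt_step i; lia.
have blk_ex n : exists b, (tt b <= n)%N /\ (n < tt b.+1)%N.
  elim: n => [|n [b [bn nb]]].
    by exists 0%N; split => //; have := tt_step 0; rewrite /tt /=; lia.
  case: (ltnP n.+1 (tt b.+1)) => h; first by exists b; split => //; lia.
  exists b.+1; split; first lia.
  have := tt_step b.+1; lia.
case: (boolp.choice blk_ex) => blk Hblk.
have blk_uniq n b : (tt b <= n)%N -> (n < tt b.+1)%N -> blk n = b.
  move=> bn nb; have [h1 h2] := Hblk n.
  case: (ltngtP (blk n) b) => // h.
    have := tt_mono _ _ h; lia.
  have := tt_mono _ _ h; lia.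
pose yb b := x (jj b).
have pi_ex n : exists k, [/\ (n <= k)%N, (k < tt (blk n).+1)%N &
    forall k', (n <= k')%N -> (k' < tt (blk n).+1)%N -> `|yb (blk n) k'| <= `|yb (blk n) k|].
  exact: argmax_ex (Hblk n).2.
case: (boolp.choice pi_ex) => pi Hpi.
pose sg k := Num.sg (yb (blk k) k).
have Hpi1 n : (n <= pi n)%N by case: (Hpi n).
have Hsg k : `|sg k| <= 1.
  by rewrite /sg normr_sg; case: (_ != 0).
have HF i : 5 * eps / 32 <= Ffun pi sg (yb i).
  case: (Hstp (st i)) => _ Hnorm Hsm [m [qE tm Hm]].
  rewrite -/(jj i) in Hnorm Hsm Hm; rewrite -ttS in qE; rewrite -/(tt i) in Hsm tm.
  set t := tt i in Hsm tm; set q := tt i.+1 in qE.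
  set d := eps / (8 * (t.+1)%:R) in Hsm.
  have hy : in_tl1 (yb i) by exact: hx.
  have tq : (t < q)%N by have := tt_step i; lia.
  have Hlow n : (n < t)%N -> (pi n < t)%N.
    move=> nt; have [_ h2 _] := Hpi n.
    have [h3 h4] := Hblk n.
    case: (ltnP (blk n) i) => h5.
      have := tt_mono _ _ h5; lia.
    have := tt_mono _ _ h5; rewrite -/t; lia.
  have Hin n : (t <= n)%N -> (n < q)%N -> (pi n < q)%N.
    move=> tn nq; have [_ h2 _] := Hpi n; by rewrite (blk_uniq n i tn nq) in h2.
  have Hmax n k : (t <= n)%N -> (n <= k)%N -> (k < q)%N -> `|yb i k| <= `|yb i (pi n)|.
    move=> tn nk kq; have nq : (n < q)%N by lia.
    have [_ _ h3] := Hpi n; move: h3; rewrite (blk_uniq n i tn nq) => h3.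
    exact: h3.
  have Hsgn k : (t <= k)%N -> (k < q)%N -> sg k * yb i k = `|yb i k|.
    by move=> tk kq; rewrite /sg (blk_uniq k i tk kq) normrEsg.
  have Hsm' k : (k < 2 * t)%N -> `|yb i k| <= d by exact: Hsm.
  have d0 : 0 <= d by apply: divr_ge0; [lra|]; apply: mulr_ge0 => //.
  have KA := keyA hy Hpi1 Hsg Hlow Hin Hsgn Hsm' (ltnW tq) (ltac:(lia) : (m <= q)%N) Hm.
  have KB := keyB hy Hpi1 Hin Hmax Hsm' qE tm Hm d0.
  have Td : t%:R * d <= eps / 8.
    have T0 : (t.+1)%:R != 0 :> R by rewrite pnatr_eq0.
    have -> : eps / 8 = (t.+1)%:R * d by rewrite /d; field.
    by apply: ler_wpM2r => //; rewrite ler_nat.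
  rewrite /yb in KA KB Hnorm |- *; lra.
have := Hw _ (F_dual Hpi1 Hsg).
have e32 : 0 < 5 * eps / 32 by lra.
move=> /cvgr0_norm_lt /(_ _ e32) /ev_ex [M HM].
have := HM (jj M) (leq_trans (jjge M).1 (jjge M).2).
have := HF M; rewrite /yb => h1 h2.
have := ler_norm (Ffun pi sg (x (jj M))); lra.
Qed.

Local Open Scope classical_set_scope.
Local Open Scope ring_scope.
Local Open Scope ereal_scope.
Import numFieldNormedType.Exports.
From Stdlib Require Import Classical_Prop.

Lemma claim (R : realType) (x : nat -> nat -> R) :
  (forall j, in_tl1 (x j)) ->
  (forall f, tl1_dual f -> (fun j => f (x j)) @ \oo --> 0%R) ->
  forall eps : R, (0 < eps)%R -> exists M, forall j, (M <= j)%N -> (Sn (x j) <= eps)%R.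
Proof.
move=> hx Hw eps e0; apply: NNPP => H; apply: (main_contra hx Hw e0) => M.
apply: NNPP => H2; apply: H; exists M => j Mj; apply: NNPP => H3; apply: H2.
exists j; split => //; apply/ltW; rewrite ltNge; exact/negP.
Qed.

Unset Implicit Arguments.
Theorem theorem1 (R : realType) (x : nat -> nat -> R) :
  weakly_null x -> (fun j => tnorm (x j)) @ \oo --> 0.
Proof.
move=> [hx Hw].
apply/fine_cvgP; split.
  by apply: nearW => j; exact: tnorm_fin.
apply/cvgrPdist_le => e e0; have [M HM] := claim hx Hw e0.
exists M => // j /= Mj.
rewrite sub0r normrN ger0_norm; first exact: HM.
by apply: fine_ge0; apply: le_trans (tilde_le_tnorm _ 0); exact: tilde_ge0.
Qed.
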